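(* Let $(\mathfrak g,[\cdot,\cdot]_{\mathfrak g},E)$ be an ENL algebra and $K:W\to\mathfrak g$ an ENE-relative Rota–Baxter operator with respect to an ENE-representation $(W;T,\rho)$. Define $[u,v]_K:=\rho(Ku)v-\rho(Kv)u$ for $u,v\in W$. Then $(W,[\cdot,\cdot]_K,T)$ is an ENL algebra.
   Context: Vector spaces are finite-dimensional over an algebraically closed field of characteristic zero. An ENL algebra is a Lie algebra with linear $E$ satisfying $E[x,y]=[x,Ey]$ for all $x,y$. An ENE-representation $(W;T,\rho)$ of $(\mathfrak g,E)$ is a Lie algebra representation $\rho:\mathfrak g\to\mathfrak{gl}(W)$ with linear $T:W\to W$ such that $T(\rho(x)u)=\rho(Ex)u=\rho(x)(Tu)$. An ENE-relative Rota–Baxter operator with respect to $(W;T,\rho)$ is a linear $K:W\to\mathfrak g$ with $[Ku,Kv]_{\mathfrak g}=K(\rho(Ku)v-\rho(Kv)u)$ for all $u,v\in W$ and $E\circ K=K\circ T$. *)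

(* Defs.v *)
From HB Require Import structures.
From mathcomp Require Import all_boot all_algebra.
Set Implicit Arguments. Unset Strict Implicit. Unset Printing Implicit Defensive.
Import GRing.Theory.
Local Open Scope ring_scope.

Definition is_linear (F : fieldType) (V W : vectType F) (f : V -> W) : Prop :=
  forall (a : F) (x y : V), f (a *: x + y) = a *: f x + f y.

Definition is_lie_bracket (F : fieldType) (V : vectType F) (br : V -> V -> V) : Prop :=
  [/\ (forall z : V, is_linear (fun x => br x z)),
      (forall x : V, is_linear (br x)),
      (forall x : V, br x x = 0) &
      (forall x y z : V, br x (br y z) + br y (br z x) + br z (br x y) = 0)].

Definition is_ENL (F : fieldType) (V : vectType F) (br : V -> V -> V) (E : V -> V) : Prop :=
  [/\ is_lie_bracket br, is_linear E &
      (forall x y : V, E (br x y) = br x (E y))].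

Definition is_lie_rep (F : fieldType) (g W : vectType F) (brg : g -> g -> g)
  (rho : g -> W -> W) : Prop :=
  [/\ (forall u : W, is_linear (fun x => rho x u)),
      (forall x : g, is_linear (rho x)) &
      (forall (x y : g) (u : W), rho (brg x y) u = rho x (rho y u) - rho y (rho x u))].

Definition is_ENE_rep (F : fieldType) (g W : vectType F) (brg : g -> g -> g)
  (E : g -> g) (T : W -> W) (rho : g -> W -> W) : Prop :=
  [/\ is_lie_rep brg rho, is_linear T &
      (forall (x : g) (u : W), T (rho x u) = rho (E x) u /\ rho (E x) u = rho x (T u))].

Definition is_ENE_RB (F : fieldType) (g W : vectType F) (brg : g -> g -> g)
  (E : g -> g) (T : W -> W) (rho : g -> W -> W) (K : W -> g) : Prop :=
  [/\ is_linear K,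
      (forall u v : W, brg (K u) (K v) = K (rho (K u) v - rho (K v) u)) &
      (forall u : W, E (K u) = K (T u))].

Definition bracketK (F : fieldType) (g W : vectType F) (rho : g -> W -> W) (K : W -> g)
  (u v : W) : W := rho (K u) v - rho (K v) u.

(* Main.v *)
Require Import Defs.
From HB Require Import structures.
From mathcomp Require Import all_boot all_algebra.
Import GRing.Theory.
Local Open Scope ring_scope.

Lemma jac6 (V : zmodType) (A B C D E G : V) :
  (A - B - (C - D)) + (C - E - (G - B)) + (G - D - (A - E)) = 0.
Proof.
rewrite !opprB !addrA subrK subrK.
rewrite [A - B + D - E + B]addrAC [A - B + D + B]addrAC subrK.
rewrite [A + D - E - D]addrAC addrK subrK subrr //.
Qed.

Section Lin.
Context {F : fieldType} {V U : vectType F} {f : V -> U}.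
Hypothesis hf : is_linear f.
Lemma lin0 : f 0 = 0.
Proof. have h := hf 1 0 0; rewrite !scale1r addr0 in h; apply/(addrI (f 0)); by rewrite addr0 -h. Qed.
Lemma linD x y : f (x + y) = f x + f y.
Proof. by have := hf 1 x y; rewrite !scale1r. Qed.
Lemma linN x : f (- x) = - f x.
Proof. by rewrite -(addr0 (- x)) -scaleN1r hf lin0 addr0 scaleN1r. Qed.
Lemma linB x y : f (x - y) = f x - f y.
Proof. by rewrite linD linN. Qed.
End Lin.

Theorem proposition6p3 (F : closedFieldType) (charF0 : [pchar F] =i pred0)
  (g W : vectType F) (brg : g -> g -> g) (E : g -> g)
  (T : W -> W) (rho : g -> W -> W) (K : W -> g) :
  is_ENL brg E ->
  is_ENE_rep brg E T rho ->
  is_ENE_RB brg E T rho K ->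
  is_ENL (bracketK rho K) T.
Proof.
move=> [_ _ _] [[rl1 rl2 rhom] lT hT] [lK hK hEK].
split=> //; last first.
  move=> u v; rewrite /bracketK (linB lT) -hEK.
  by case: (hT (K u) v) => -> ->; case: (hT (K v) u) => ->.
split.
- move=> z a x y; rewrite /bracketK lK.
  have h1 := rl1 z a (K x) (K y); rewrite /= in h1; rewrite h1.
  rewrite (rl2 (K z)) scalerBr.
  rewrite !opprD !addrA; congr (_ + _).
  by rewrite addrAC.
- move=> x a y z; rewrite /bracketK lK.
  have h1 := rl1 x a (K y) (K z); rewrite /= in h1; rewrite h1.
  rewrite (rl2 (K x)) scalerBr.
  rewrite !opprD !addrA; congr (_ + _).
  by rewrite addrAC.
- by move=> x; rewrite /bracketK subrr.
- move=> u v w; rewrite /bracketK -!hK !rhom !(linB (rl2 _)).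
  exact: jac6.
Qed.
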